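(* Let $P=P(m_1,\dots,m_{n-1})$ be a natural unit interval order with $m_1=r$ for some $r\le n-1$ and $m_2=\cdots=m_{n-1}=n$, and let $G=\mathrm{inc}(P)$. Then $$X_G(\mathbf{x},t)=[n-2]_t!\left([n]_t[r-1]_t\,e_n+t^{r-1}[n-r]_t\,e_{(n-1,1)}\right).$$
   Context: A natural unit interval order $P(m_1,\dots,m_{n-1})$ is defined for integers $m_1\le\cdots\le m_{n-1}\le n$ with $m_i\ge i$: it is the poset on $[n]$ with $i<_P j$ iff $i<n$ and $j\in\{m_i+1,\dots,n\}$. Its incomparability graph has vertex set $[n]$ and an edge $\{i,j\}$ ($i<j$) iff $j\le m_i$. The chromatic quasisymmetric function of a graph $G$ on $V\subset\mathbb{P}$ is $X_G(\mathbf{x},t)=\sum_\kappa t^{\mathrm{asc}(\kappa)}\prod_v x_{\kappa(v)}$ over proper colorings $\kappa:V\to\mathbb{P}$, with $\mathrm{asc}(\kappa)$ the number of edges $\{i,j\}$, $i<j$, with $\kappa(i)<\kappa(j)$. $[m]_t=1+t+\cdots+t^{m-1}$, $[m]_t!=[1]_t\cdots[m]_t$; $e_\lambda$ denotes elementary symmetric functions. *)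

(* Defs.v *)
From mathcomp Require Import all_boot all_order all_algebra.
From mathcomp Require Import mpoly.
Set Implicit Arguments. Unset Strict Implicit. Unset Printing Implicit Defensive.
Import GRing.Theory.
Local Open Scope ring_scope.

(* Natural unit interval order P(m_1,...,m_{n-1}) on [n] = {1,...,n}:
   the sequence m : nat -> nat is only consulted at 1..n-1. *)
Definition is_nuio_seq (n : nat) (m : nat -> nat) : Prop :=
  (forall i, (1 <= i <= n.-1)%N -> (i <= m i <= n)%N) /\
  (forall i, (1 <= i < n.-1)%N -> (m i <= m i.+1)%N).

(* Vertices of inc(P) are 1..n, represented by v : 'I_n standing for v+1.
   Edge {i,j} with i<j iff j <= m_i. *)
Definition inc_edge (n : nat) (m : nat -> nat) (u v : 'I_n) : bool :=
  ((u < v)%N && (v.+1 <= m u.+1)%N).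

(* proper colorings with colours 1..N (represented by 'I_N, order preserved) *)
Definition proper_col (n N : nat) (m : nat -> nat) (k : {ffun 'I_n -> 'I_N}) : bool :=
  [forall u : 'I_n, forall v : 'I_n, inc_edge m u v ==> (k u != k v)].

Definition asc (n N : nat) (m : nat -> nat) (k : {ffun 'I_n -> 'I_N}) : nat :=
  #|[set p : 'I_n * 'I_n | inc_edge m p.1 p.2 && (k p.1 < k p.2)%N]|.

(* X_G(x_1,...,x_N, t), the chromatic quasisymmetric function of G = inc(P(m))
   with all variables x_i, i > N, set to 0; coefficients in Z[t]. *)
Definition chromQS (n : nat) (m : nat -> nat) (N : nat) : {mpoly {poly int}[N]} :=
  \sum_(k : {ffun 'I_n -> 'I_N} | proper_col m k)
     ('X ^+ asc m k) *: \prod_(v : 'I_n) 'X_(k v).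

Definition qint (k : nat) : {poly int} := \sum_(i < k) 'X ^+ i.
Definition qfact (k : nat) : {poly int} := \prod_(i < k) qint i.+1.

(* Main.v *)
Require Import Defs.
From mathcomp Require Import all_boot all_order all_algebra.
From mathcomp Require Import mpoly.
From mathcomp Require Import fingroup perm.
From mathcomp Require Import zify ring.
Set Implicit Arguments. Unset Strict Implicit. Unset Printing Implicit Defensive.
Import GRing.Theory.
Local Open Scope ring_scope.

Lemma ascE n N m (k : {ffun 'I_n -> 'I_N}) :
  asc m k = (\sum_(u : 'I_n) \sum_(v : 'I_n) (inc_edge m u v && (k u < k v)%N))%N.
Proof.
rewrite /asc -sum1dep_card pair_big /= big_mkcond /=.
by apply: eq_bigr => p _; case: (_ && _).
Qed.

Lemma sum_pt (I J : finType) (x : I) (y : J) (P : I -> J -> bool) :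
  (\sum_(u : I) \sum_(v : J) ((u == x) && (v == y) && P u v))%N = P x y.
Proof.
rewrite (bigD1 x) //=. 
rewrite [X in (_ + X)%N]big1.
2: move=> u /negbTE Hu; apply: big1 => v _; by rewrite Hu.
rewrite addn0 (bigD1 y) //= eqxx [X in (_ + X)%N]big1 ?addn0 ?eqxx //=.
by move=> v /negbTE Hv; rewrite Hv.

Qed.


Definition mr (n s : nat) : nat -> nat := fun k => if k == 1%N then s else n.+1.

Lemma inc_edge_mr n s (u v : 'I_n.+1) :
  inc_edge (mr n s) u v = (u < v)%N && ((nat_of_ord u == 0%N) ==> (v < s)%N).
Proof.
rewrite /inc_edge /mr; case: u v => u hu [v hv] /=.
case: u hu => [|u] hu /=; first by [].
by rewrite (ltn_ord (Ordinal hv)) andbT.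
Qed.

Lemma qint_add a b : qint (a + b) = qint a + 'X ^+ a * qint b.
Proof.
rewrite /qint big_split_ord /=; congr (_ + _); rewrite mulr_sumr.
by apply: eq_bigr => i _; rewrite exprD.
Qed.

Lemma qfactS p : qfact p.+1 = qfact p * qint p.+1.
Proof. by rewrite /qfact big_ord_recr. Qed.

Definition mono n N (k : {ffun 'I_n -> 'I_N}) : {mpoly {poly int}[N]} :=
  \prod_(v : 'I_n) 'X_(k v).

Definition gc n N m (k : {ffun 'I_n -> 'I_N}) : {poly int} :=
  if proper_col m k then 'X ^+ asc m k else 0.

Lemma chromQS_gc n N m :
  chromQS n m N = \sum_(k : {ffun 'I_n -> 'I_N}) gc m k *: mono k.
Proof.
rewrite /chromQS big_mkcond /=; apply: eq_bigr => k _.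
by rewrite /gc; case: ifP => //; rewrite scale0r.
Qed.

Lemma edge_mrS n s (u v : 'I_n.+1) : (1 <= s <= n)%N ->
  inc_edge (mr n s.+1) u v = inc_edge (mr n s) u v || ((u == ord0) && (v == inord s)).
Proof.
move=> hs; rewrite !inc_edge_mr -!val_eqE /= inordK; last by lia.
case: u v => u hu [v hv] /=.
case: (ltnP u v); case: (eqVneq u 0%N); case: (eqVneq v s); move=> *; lia.
Qed.

Lemma proper_mrS n N s (k : {ffun 'I_n.+1 -> 'I_N}) : (1 <= s <= n)%N ->
  proper_col (mr n s.+1) k = proper_col (mr n s) k && (k ord0 != k (inord s)).
Proof.
move=> hs; apply/idP/idP.
  move/forallP=> H; apply/andP; split.
    apply/forallP=> u; apply/forallP=> v; apply/implyP=> e.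
    by have := forallP (H u) v; rewrite edge_mrS // e.
  by have := forallP (H ord0) (inord s); rewrite edge_mrS // !eqxx orbT.
case/andP=> /forallP H1 ne; apply/forallP=> u; apply/forallP=> v.
rewrite edge_mrS //; apply/implyP; case/orP=> [e|/andP[/eqP -> /eqP ->] //].
by have := forallP (H1 u) v; rewrite e.
Qed.

Lemma asc_mrS n N s (k : {ffun 'I_n.+1 -> 'I_N}) : (1 <= s <= n)%N ->
  asc (mr n s.+1) k = (asc (mr n s) k + (k ord0 < k (inord s)))%N.
Proof.
move=> hs; rewrite !ascE.
rewrite -(sum_pt ord0 (inord s) (fun u v => (k u < k v)%N)).
rewrite -big_split /=; apply: eq_bigr => u _.
rewrite -big_split /=; apply: eq_bigr => v _.
rewrite edge_mrS //.
have : ~~ (inc_edge (mr n s) u v && ((u == ord0) && (v == inord s))).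
  rewrite inc_edge_mr -!val_eqE /= inordK; last by lia.
  case: u v => u hu [v hv] /=; apply/negP; case/andP => /andP[A B] /andP[/eqP C /eqP D].
  subst; rewrite /= in B; lia.
by case: (inc_edge _ u v); case: (u == ord0); case: (v == inord s); case: (k u < k v)%N.
Qed.

Definition ta n r : {perm 'I_n.+1} := tperm (inord r.-1) (inord r).
Definition sw n N r (k : {ffun 'I_n.+1 -> 'I_N}) : {ffun 'I_n.+1 -> 'I_N} :=
  [ffun i => k (ta n r i)].

Lemma ta_val n r (u : 'I_n.+1) : (2 <= r <= n)%N ->
  nat_of_ord (ta n r u) = if nat_of_ord u == r.-1 then r else if nat_of_ord u == r then r.-1 else nat_of_ord u.
Proof.
move=> hr; rewrite /ta; case: tpermP => [->|->|].
- by rewrite !inordK ?eqxx //; lia.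
- rewrite !inordK; [|lia..]. case: ifP => [/eqP|_]; [lia|]. by rewrite eqxx.
- move=> /eqP h1 /eqP h2; rewrite -!val_eqE /= !inordK in h1 h2; try lia.
  by rewrite (negbTE h1) (negbTE h2).
Qed.

Lemma sw_edge n r (u v : 'I_n.+1) : (2 <= r <= n)%N ->
  inc_edge (mr n r.-1) (ta n r u) (ta n r v) =
  if (u == inord r.-1) && (v == inord r) then false
  else if (u == inord r) && (v == inord r.-1) then true
  else inc_edge (mr n r.-1) u v.
Proof.
move=> hr; rewrite !inc_edge_mr !ta_val // -!val_eqE /= !inordK; try lia.
case: u v => u hu [v hv] /=.
case: (eqVneq u r.-1) => ?; case: (eqVneq v r) => ?; case: (eqVneq u r) => ?;
  case: (eqVneq v r.-1) => ?; rewrite /=; lia.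
Qed.

Lemma ta0 n r : (2 <= r <= n)%N -> ta n r ord0 = ord0.
Proof. by move=> hr; apply: ord_inj; rewrite ta_val //=; case: ifP; [lia|case: ifP; lia]. Qed.

Lemma sw0 n N r k : (2 <= r <= n)%N -> @sw n N r k ord0 = k ord0.
Proof. by move=> hr; rewrite ffunE ta0. Qed.

Lemma swa n N r k : @sw n N r k (inord r.-1) = k (inord r).
Proof. by rewrite ffunE /ta tpermL. Qed.

Lemma swb n N r k : @sw n N r k (inord r) = k (inord r.-1).
Proof. by rewrite ffunE /ta tpermR. Qed.

Lemma swK n N r k : @sw n N r (sw r k) = k.
Proof. by apply/ffunP => i; rewrite !ffunE tpermK. Qed.

Lemma sw_inj n N r : injective (@sw n N r).
Proof. exact: (can_inj (@swK n N r)). Qed.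

Lemma mono_sw n N r k : mono (@sw n N r k) = mono k.
Proof.
rewrite /mono [RHS](reindex_inj (@perm_inj _ (ta n r))) /=.
by apply: eq_bigr => i _; rewrite ffunE.
Qed.

Lemma edge_ab n r : (2 <= r <= n)%N ->
  inc_edge (mr n r.-1) (inord r.-1 : 'I_n.+1) (inord r).
Proof. by move=> hr; rewrite inc_edge_mr !inordK; lia. Qed.

Lemma proper_sw n N r k : (2 <= r <= n)%N ->
  proper_col (mr n r.-1) k -> proper_col (mr n r.-1) (@sw n N r k).
Proof.
move=> hr /forallP H; apply/forallP=> u; apply/forallP=> v; apply/implyP=> e.
rewrite !ffunE.
have := sw_edge (ta n r u) (ta n r v) hr; rewrite !tpermK e.
case: ifP => //; case: ifP.
  case/andP=> /eqP -> /eqP -> _ _.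
  by have := forallP (H (inord r.-1)) (inord r); rewrite edge_ab // eq_sym.
move=> _ _ e'.
by have := forallP (H (ta n r u)) (ta n r v); rewrite -e'.
Qed.

Lemma asc_sw n N r (k : {ffun 'I_n.+1 -> 'I_N}) : (2 <= r <= n)%N -> (k (inord r.-1) < k (inord r))%N ->
  asc (mr n r.-1) k = (asc (mr n r.-1) (@sw n N r k)).+1.
Proof.
move=> hr hk.
have E1 : (asc (mr n r.-1) k + (k (inord r) < k (inord r.-1))%N =
         asc (mr n r.-1) (@sw n N r k) + (k (inord r.-1) < k (inord r))%N)%N.
  rewrite !ascE.
  rewrite [in RHS](reindex_inj (@perm_inj _ (ta n r))) /=.
  rewrite -(sum_pt (inord r) (inord r.-1) (fun u v => (k u < k v)%N)).
  rewrite -(sum_pt (inord r.-1) (inord r) (fun u v => (k u < k v)%N)).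
  rewrite -!big_split /=; apply: eq_bigr => u _.
  rewrite [in RHS](reindex_inj (@perm_inj _ (ta n r))) /=.
  rewrite -!big_split /=; apply: eq_bigr => v _.
  rewrite !ffunE !tpermK sw_edge //.
  have ne : (inord r.-1 == inord r :> 'I_n.+1) = false.
    by apply/negbTE; rewrite -val_eqE /= !inordK; lia.
  have ne' : (inord r == inord r.-1 :> 'I_n.+1) = false by rewrite eq_sym.
  case: (eqVneq u (inord r.-1)) => [->|hu]; case: (eqVneq v (inord r)) => [->|hv];
    rewrite ?ne ?ne' ?andbF /= ?addn0 ?add0n //.
  - by rewrite edge_ab.
  - case: ifP => [/andP[/eqP Hu /eqP Hv]|_]; last by rewrite addn0.
    subst u v.
    by rewrite inc_edge_mr !inordK /= ?addn0; lia.
move: E1; rewrite hk ltnNge (ltnW hk) /= addn0 addn1 => ->. by [].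
Qed.

Lemma modular_local N (A : nat) (c p q : 'I_N) : (p < q)%N ->
  (1 + 'X) * (if c != p then 'X ^+ (A.+1 + (c < p)) else 0) - 'X * 'X ^+ A.+1
  - (if (c != p) && (c != q) then 'X ^+ (A.+1 + (c < p) + (c < q)) else 0)
  + ((1 + 'X) * (if c != q then 'X ^+ (A + (c < q)) else 0) - 'X * 'X ^+ A
  - (if (c != q) && (c != p) then 'X ^+ (A + (c < q) + (c < p)) else 0))
  = 0 :> {poly int}.
Proof.
move=> hpq; rewrite -!(inj_eq (@ord_inj _)).
case: (ltngtP c p) => hcp.
- have hcq : (c < q)%N by lia.
  rewrite hcq (ltn_eqF hcq) /= !addn1 !exprS; ring.
- case: (ltngtP c q) => hcq /=; rewrite ?addn0 ?addn1 !exprS; ring.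
- have hcq : (c < q)%N by lia.
  rewrite hcq (ltn_eqF hcq) /= ?addn0 ?addn1 !exprS; ring.
Qed.

Lemma gc_r n N r (k : {ffun 'I_n.+1 -> 'I_N}) : (2 <= r <= n)%N ->
  gc (mr n r) k = if proper_col (mr n r.-1) k && (k ord0 != k (inord r.-1))
                  then 'X ^+ (asc (mr n r.-1) k + (k ord0 < k (inord r.-1))) else 0.
Proof.
move=> hr; have E : r = (r.-1).+1 by lia.
rewrite /gc {1 2}E proper_mrS ?asc_mrS //; lia.
Qed.

Lemma gc_r1 n N r (k : {ffun 'I_n.+1 -> 'I_N}) : (2 <= r <= n)%N ->
  gc (mr n r.+1) k = if proper_col (mr n r.-1) k && (k ord0 != k (inord r.-1))
                        && (k ord0 != k (inord r))
                  then 'X ^+ (asc (mr n r.-1) k + (k ord0 < k (inord r.-1))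
                              + (k ord0 < k (inord r))) else 0.
Proof.
move=> hr; have E : r = (r.-1).+1 by lia.
rewrite /gc proper_mrS ?asc_mrS; try lia.
rewrite {1 3}E proper_mrS ?asc_mrS -?E //; lia.
Qed.

Lemma proper_swE n N r k : (2 <= r <= n)%N ->
  proper_col (mr n r.-1) (@sw n N r k) = proper_col (mr n r.-1) k.
Proof.
move=> hr; apply/idP/idP; last exact: proper_sw.
by move/(proper_sw hr); rewrite swK.
Qed.

Lemma modular_pt n N r (k : {ffun 'I_n.+1 -> 'I_N}) : (2 <= r <= n)%N ->
  (k (inord r.-1) < k (inord r))%N ->
  ((1 + 'X) * gc (mr n r) k - 'X * gc (mr n r.-1) k - gc (mr n r.+1) k)
  + ((1 + 'X) * gc (mr n r) (sw r k) - 'X * gc (mr n r.-1) (sw r k)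
     - gc (mr n r.+1) (sw r k)) = 0.
Proof.
move=> hr hk.
rewrite !(gc_r1 _ hr) !(gc_r _ hr) /gc proper_swE // !sw0 // swa swb.
case: (boolP (proper_col _ k)) => P0 /=; last by rewrite !mulr0 !subr0 addr0.
rewrite (asc_sw hr hk).
exact: (modular_local (asc (mr n r.-1) (sw r k)) (k ord0) hk).
Qed.

Lemma gc_eq0 n N r (k : {ffun 'I_n.+1 -> 'I_N}) : (2 <= r <= n)%N ->
  k (inord r.-1) = k (inord r) ->
  (1 + 'X) * gc (mr n r) k - 'X * gc (mr n r.-1) k - gc (mr n r.+1) k = 0.
Proof.
move=> hr hab.
have P0 : proper_col (mr n r.-1) k = false.
  apply/negbTE/negP => /forallP H.
  by have := forallP (H (inord r.-1)) (inord r); rewrite edge_ab // hab eqxx.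
rewrite (gc_r1 _ hr) (gc_r _ hr) /gc P0 /=.
by rewrite !mulr0 !subr0.
Qed.

Lemma modular n N r : (2 <= r <= n)%N ->
  (1 + 'X) *: chromQS n.+1 (mr n r) N =
  'X *: chromQS n.+1 (mr n r.-1) N + chromQS n.+1 (mr n r.+1) N.
Proof.
move=> hr; rewrite !chromQS_gc.
pose f := fun k : {ffun 'I_n.+1 -> 'I_N} =>
  ((1 + 'X) * gc (mr n r) k - 'X * gc (mr n r.-1) k - gc (mr n r.+1) k).
have key : \sum_k f k *: mono k = 0.
  rewrite (bigID (fun k : {ffun 'I_n.+1 -> 'I_N} => (k (inord r.-1) < k (inord r))%N)) /=.
  have -> : \sum_(k : {ffun 'I_n.+1 -> 'I_N} | ~~ (k (inord r.-1) < k (inord r))%N) f k *: mono k =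
            \sum_(k : {ffun 'I_n.+1 -> 'I_N} | (k (inord r) < k (inord r.-1))%N) f k *: mono k.
    rewrite big_mkcond [RHS]big_mkcond; apply: eq_bigr => k _.
    case: ltngtP => h //=.
    by rewrite /f gc_eq0 ?scale0r //; apply: ord_inj.
  rewrite [X in _ + X](reindex_inj (@sw_inj n N r)) /=.
  rewrite [X in _ + X](eq_bigl (fun k : {ffun 'I_n.+1 -> 'I_N} => (k (inord r.-1) < k (inord r))%N)); last first.
    by move=> k /=; rewrite swa swb.
  rewrite -big_split /=.
  apply: big1 => k hk.
  by rewrite mono_sw -scalerDl /f modular_pt // scale0r.
apply/eqP; rewrite -subr_eq0; apply/eqP; rewrite -[X in _ = X]key /f.
rewrite [X in _ = X](eq_bigr (fun k => (1 + 'X) *: (gc (mr n r) k *: mono k)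
   - 'X *: (gc (mr n r.-1) k *: mono k) - gc (mr n r.+1) k *: mono k)); last first.
  by move=> k _; rewrite !scalerBl !scalerA.
by rewrite !sumrB -!scaler_sumr opprD addrA.
Qed.

Definition cons_ff (T : finType) p (c : T) (k : {ffun 'I_p -> T}) : {ffun 'I_p.+1 -> T} :=
  [ffun i => if unlift ord0 i is Some j then k j else c].

Lemma cons_ff0 (T : finType) p c k : @cons_ff T p c k ord0 = c.
Proof. by rewrite ffunE unlift_none. Qed.

Lemma cons_ffS (T : finType) p c k j : @cons_ff T p c k (lift ord0 j) = k j.
Proof. by rewrite ffunE liftK. Qed.

Lemma big_ffunS (T : finType) (V : nmodType) p (F : {ffun 'I_p.+1 -> T} -> V) :
  \sum_(k : {ffun 'I_p.+1 -> T}) F k =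
  \sum_(c : T) \sum_(k : {ffun 'I_p -> T}) F (cons_ff c k).
Proof.
rewrite pair_big /=.
rewrite (reindex (fun ck : T * {ffun 'I_p -> T} => cons_ff ck.1 ck.2)) //=.
apply: onW_bij.
exists (fun k : {ffun 'I_p.+1 -> T} => (k ord0, [ffun j => k (lift ord0 j)])).
  move=> [c k] /=; rewrite cons_ff0; congr (_, _).
  by apply/ffunP => j; rewrite ffunE cons_ffS.
move=> k; apply/ffunP => i; rewrite ffunE.
by case: (unliftP ord0 i) => [j ->|->]; rewrite ?ffunE.
Qed.

Definition rk N (T : {set 'I_N}) (c : 'I_N) : nat := #|[set s in T | (c < s)%N]|.

Lemma rk_lt N (T : {set 'I_N}) c : c \in T -> (rk T c < #|T|)%N.
Proof.
move=> cT; apply: proper_card; apply/properP; split.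
  by apply/subsetP => s; rewrite inE => /andP[].
by exists c => //; rewrite inE ltnn andbF.
Qed.

Lemma rk_inj N (T : {set 'I_N}) : {in T &, injective (rk T)}.
Proof.
have H : forall c d, c \in T -> d \in T -> (c < d)%N -> (rk T d < rk T c)%N.
  move=> c d cT dT cd; apply: proper_card; apply/properP; split.
    apply/subsetP => s; rewrite !inE => /andP[-> ds] /=; exact: ltn_trans ds.
  by exists d; rewrite !inE ?dT ?cd // ltnn andbF.
move=> c d cT dT e; apply: ord_inj; case: (ltngtP c d) => // h.
  by have := H _ _ cT dT h; rewrite e ltnn.
by have := H _ _ dT cT h; rewrite e ltnn.
Qed.

Lemma sum_rk N p (T : {set 'I_N}) : #|T| = p.+1 ->
  \sum_(c in T) ('X : {poly int}) ^+ rk T c = qint p.+1.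
Proof.
move=> hT.
rewrite -big_enum -(big_map (rk T) xpredT (fun i => 'X ^+ i)).
rewrite /qint -(big_mkord xpredT (fun i => 'X ^+ i)) /index_iota subn0.
apply: perm_big.
have U : uniq (map (rk T) (enum T)).
  rewrite map_inj_in_uniq ?enum_uniq //.
  by move=> x y; rewrite !mem_enum; exact: rk_inj.
have Sub : {subset map (rk T) (enum T) <= iota 0 p.+1}.
  move=> x /mapP [c]; rewrite mem_enum => cT ->.
  by rewrite mem_iota /= add0n -hT rk_lt.
have [] := uniq_min_size U Sub; last move=> _ E.
  by rewrite size_iota size_map -cardE hT.
by apply: uniq_perm => //; apply: iota_uniq.
Qed.

Lemma exch_sets N (V : nmodType) p (F : {set 'I_N} -> 'I_N -> V) :
  \sum_(S : {set 'I_N} | #|S| == p) \sum_(c | c \notin S) F S c =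
  \sum_(T : {set 'I_N} | #|T| == p.+1) \sum_(c in T) F (T :\ c) c.
Proof.
rewrite (exchange_big_dep xpredT) //= [RHS](exchange_big_dep xpredT) //=.
apply: eq_bigr => c _.
rewrite [RHS](reindex_onto (fun S => c |: S) (fun T => T :\ c)) /=; last first.
  by move=> T /andP[_ cT]; rewrite setD1K.
apply: eq_big => [S|S /andP[_ cS]]; last by rewrite setU1K.
case: (boolP (c \in S)) => cS /=.
  rewrite andbF; apply/esym/negbTE; apply/negP => /andP[_ /eqP E].
  by move: cS; rewrite -E !inE eqxx.
by rewrite setU1K // eqxx cardsU1 cS setU11 /= !andbT.
Qed.

Lemma KC N (V : lmodType {poly int}) p (g : {set 'I_N} -> V) :
  \sum_(S : {set 'I_N} | #|S| == p)
     \sum_(c | c \notin S) ('X ^+ rk S c) *: g (c |: S) =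
  qint p.+1 *: \sum_(T : {set 'I_N} | #|T| == p.+1) g T.
Proof.
rewrite (exch_sets p (fun S c => ('X ^+ rk S c) *: g (c |: S))) scaler_sumr.
apply: eq_bigr => T /eqP hT.
rewrite -(sum_rk hT) scaler_suml; apply: eq_bigr => c cT.
rewrite setD1K //; congr (_ ^+ _ *: _).
rewrite /rk; apply: eq_card => s; rewrite !inE.
by case: (eqVneq s c) => [->|]; rewrite ?ltnn ?andbF.
Qed.

Definition ascK p N (k : {ffun 'I_p -> 'I_N}) : nat :=
  \sum_(u : 'I_p) \sum_(v : 'I_p) ((u < v)%N && (k u < k v)%N).
Definition imK p N (k : {ffun 'I_p -> 'I_N}) : {set 'I_N} := [set k i | i : 'I_p].

Lemma inj_cons p N c (k : {ffun 'I_p -> 'I_N}) :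
  injectiveb (cons_ff c k) = injectiveb k && (c \notin imK k).
Proof.
apply/injectiveP/andP.
  move=> H; split.
    apply/injectiveP => i j e; apply: (@lift_inj _ ord0); apply: H.
    by rewrite !cons_ffS.
  apply/imsetP => [[j _ e]]; have := H ord0 (lift ord0 j).
  rewrite cons_ff0 cons_ffS => /(_ e) /eqP; by rewrite (negbTE (neq_lift _ _)).
case=> /injectiveP H cn i j.
case: (unliftP ord0 i) => [i' ->|->]; case: (unliftP ord0 j) => [j' ->|->];
  rewrite ?cons_ff0 ?cons_ffS //.
- by move/H => ->.
- by move=> e; case/imsetP: cn; exists i'.
- by move=> e; case/imsetP: cn; exists j'.
Qed.

Lemma im_cons p N c (k : {ffun 'I_p -> 'I_N}) : imK (cons_ff c k) = c |: imK k.
Proof.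
apply/setP => s; rewrite !inE; apply/imsetP/orP.
  case=> i _ ->; case: (unliftP ord0 i) => [i' ->|->].
    by right; rewrite cons_ffS; apply/imsetP; exists i'.
  by left; rewrite cons_ff0.
case=> [/eqP ->|/imsetP [i _ ->]].
  by exists ord0; rewrite ?cons_ff0.
by exists (lift ord0 i); rewrite ?cons_ffS.
Qed.

Lemma ascK_cons p N c (k : {ffun 'I_p -> 'I_N}) :
  ascK (cons_ff c k) = ((\sum_(j : 'I_p) (c < k j)%N) + ascK k)%N.
Proof.
rewrite /ascK big_ord_recl big_ord_recl /= cons_ff0 add0n.
congr (_ + _)%N.
  by apply: eq_bigr => j _; rewrite cons_ffS.
apply: eq_bigr => i _; rewrite big_ord_recl /= add0n.
by apply: eq_bigr => j _; rewrite !cons_ffS /bump /=.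
Qed.

Lemma sum_lt_rk p N (c : 'I_N) (k : {ffun 'I_p -> 'I_N}) : injectiveb k ->
  (\sum_(j : 'I_p) (c < k j)%N)%N = rk (imK k) c.
Proof.
move/injectiveP => H.
rewrite (eq_bigr (fun j => if (c < k j)%N then 1 else 0)%N); last by move=> j _; case: ifP.
rewrite -big_mkcond sum1dep_card /rk.
rewrite -(card_imset _ H); apply: eq_card => s; rewrite !inE.
apply/imsetP/andP.
  by case=> j; rewrite inE => cj ->; split => //; apply/imsetP; exists j.
by case=> /imsetP [j _ ->] cj; exists j; rewrite ?inE.
Qed.

Lemma clique N (V : lmodType {poly int}) p (g : {set 'I_N} -> V) :
  \sum_(k : {ffun 'I_p -> 'I_N} | injectiveb k) 'X ^+ ascK k *: g (imK k) =
  qfact p *: \sum_(S : {set 'I_N} | #|S| == p) g S.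
Proof.
elim: p g => [|p IH] g.
  have k0 : #|'I_0| = 0%N by rewrite card_ord.
  rewrite (big_pred1 (ffun0 k0 : {ffun 'I_0 -> 'I_N})); last first.
    move=> k /=; apply/injectiveP/eqP => [_|_ [] //].
    by apply/ffunP => -[].
  rewrite (big_pred1 set0); last by move=> S /=; rewrite cards_eq0.
  rewrite /qfact big_ord0 scale1r /ascK big_ord0 expr0 scale1r.
  apply: congr1; apply/setP => s; rewrite /imK in_set0; apply/negbTE/imsetP => -[[]] //.
rewrite big_mkcond big_ffunS /= exchange_big /=.
rewrite (bigID (fun k : {ffun 'I_p -> 'I_N} => injectiveb k)) /=.
rewrite [X in _ + X]big1 ?addr0; last first.
  move=> k /negbTE hk; apply: big1 => c _; by rewrite inj_cons hk.
pose g' := fun S : {set 'I_N} =>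
  \sum_(c | c \notin S) ('X ^+ rk S c) *: g (c |: S).
apply: etrans (_ : \sum_(k : {ffun 'I_p -> 'I_N} | injectiveb k) 'X ^+ ascK k *: g' (imK k) = _).
  apply: eq_bigr => k hk; rewrite /g' scaler_sumr [RHS]big_mkcond.
  apply: eq_bigr => c _; rewrite inj_cons hk /=.
  case: ifP => // cn.
  by rewrite ascK_cons sum_lt_rk // im_cons exprD scalerA mulrC.
by rewrite (IH g') /g' KC scalerA qfactS.
Qed.

Lemma mono_im p N (k : {ffun 'I_p -> 'I_N}) : injectiveb k ->
  mono k = \prod_(i in imK k) 'X_i.
Proof.
move/injectiveP => H; rewrite /mono /imK big_imset //=.
by move=> x y _ _; apply: H.
Qed.

Lemma Ytop n N : chromQS n.+1 (mr n n.+1) N = qfact n.+1 *: mesym N {poly int} n.+1.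
Proof.
rewrite chromQS_gc /mesym -(clique n.+1 (fun S : {set 'I_N} => \prod_(i in S) ('X_i : {mpoly {poly int}[N]}))).
rewrite [RHS]big_mkcond /=; apply: eq_bigr => k _.
have E : forall u v : 'I_n.+1, inc_edge (mr n n.+1) u v = (u < v)%N.
  by move=> u v; rewrite inc_edge_mr ltn_ord implybT andbT.
rewrite /gc.
have -> : proper_col (mr n n.+1) k = injectiveb k.
  apply/idP/idP.
    move/forallP => H; apply/injectiveP => u v e; apply: ord_inj.
    case: (ltngtP u v) => // h.
      by have := forallP (H u) v; rewrite E h e eqxx.
    by have := forallP (H v) u; rewrite E h e eqxx.
  move/injectiveP => H; apply/forallP => u; apply/forallP => v; apply/implyP.
  rewrite E => h; apply/eqP => /H e; by rewrite e ltnn in h.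
case: ifP => hk; last by rewrite scale0r.
rewrite mono_im //; congr (_ ^+ _ *: _).
by rewrite ascE /ascK; apply: eq_bigr => u _; apply: eq_bigr => v _; rewrite E.
Qed.

Lemma Y1 n N : chromQS n.+1 (mr n 1) N =
  qfact n *: (mesym N {poly int} n * mesym N {poly int} 1).
Proof.
have E0 : forall v : 'I_n.+1, inc_edge (mr n 1) ord0 v = false.
  by move=> v; rewrite inc_edge_mr /=; case: (nat_of_ord v).
have E1 : forall u : 'I_n, inc_edge (mr n 1) (lift ord0 u) ord0 = false.
  by move=> u; rewrite inc_edge_mr.
have E2 : forall u v : 'I_n, inc_edge (mr n 1) (lift ord0 u) (lift ord0 v) = (u < v)%N.
  by move=> u v; rewrite inc_edge_mr /= /bump /= andbT ltn_add2l.
rewrite chromQS_gc big_ffunS mesym1E mulrC mulr_suml scaler_sumr.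
apply: eq_bigr => c _.
rewrite scalerAr /mesym -(clique n (fun S : {set 'I_N} => \prod_(i in S) ('X_i : {mpoly {poly int}[N]}))) mulr_sumr.
rewrite [RHS]big_mkcond /=; apply: eq_bigr => k _; rewrite /gc.
have -> : proper_col (mr n 1) (cons_ff c k) = injectiveb k.
  apply/idP/idP.
    move/forallP => H; apply/injectiveP => u v e; apply: ord_inj.
    case: (ltngtP u v) => // h.
      by have := forallP (H (lift ord0 u)) (lift ord0 v); rewrite E2 h !cons_ffS e eqxx.
    by have := forallP (H (lift ord0 v)) (lift ord0 u); rewrite E2 h !cons_ffS e eqxx.
  move/injectiveP => H; apply/forallP => u; apply/forallP => v; apply/implyP.
  case: (unliftP ord0 u) => [i ->|->]; last by rewrite E0.
  case: (unliftP ord0 v) => [j ->|->]; last by rewrite E1.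
  rewrite E2 !cons_ffS => h; apply/eqP => /H e; by rewrite e ltnn in h.
case: ifP => hk; last by rewrite scale0r.
rewrite -mono_im // -scalerAr; congr (_ ^+ _ *: _).
  rewrite ascE /ascK big_ord_recl big1 ?add0n; last by move=> v _; rewrite E0.
  apply: eq_bigr => u _; rewrite big_ord_recl E1 add0n.
  by apply: eq_bigr => v _; rewrite E2 !cons_ffS.
by rewrite /mono big_ord_recl cons_ff0; congr (_ * _); apply: eq_bigr => i _; rewrite cons_ffS.
Qed.

Lemma chromQS_ext n m m' N : (forall u v : 'I_n, inc_edge m u v = inc_edge m' u v) ->
  chromQS n m N = chromQS n m' N.
Proof.
move=> H; rewrite /chromQS.
have P : forall k : {ffun 'I_n -> 'I_N}, proper_col m k = proper_col m' k.
  by move=> k; apply: eq_forallb => u; apply: eq_forallb => v; rewrite H.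
apply: eq_big => [k|k _]; first exact: P.
congr ('X ^+ _ *: _); rewrite /asc; apply: eq_card => p; rewrite !inE H //.
Qed.

Lemma scale_inj N (c : {poly int}) (x y : {mpoly {poly int}[N]}) :
  c != 0 -> c *: x = c *: y -> x = y.
Proof.
move=> hc; rewrite -!mul_mpolyC; apply: mulfI; by rewrite mpolyC_eq0.
Qed.

Lemma qint_neq0 n : (1 <= n)%N -> qint n != 0.
Proof.
move=> hn; have -> : n = (1 + n.-1)%N by lia.
rewrite qint_add /qint big_ord1 expr0 expr1.
apply/eqP => /(congr1 (fun p : {poly int} => p`_0)).
by rewrite coefD coef1 coefXM coef0 /= addr0 => /eqP; rewrite oner_eq0.
Qed.


Lemma rec_gen (V : lmodType {poly int}) (Y : nat -> V) n :
  (forall s, (2 <= s <= n)%N -> (1 + 'X) *: Y s = 'X *: Y s.-1 + Y s.+1) ->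
  forall s, (1 <= s <= n.+1)%N -> Y s = Y 1%N + qint s.-1 *: (Y 2%N - Y 1%N).
Proof.
move=> M.
have SA : forall s, (1 <= s <= n)%N -> Y s.+1 - Y s = 'X ^+ s.-1 *: (Y 2%N - Y 1%N).
  elim=> [|s IH] hs; first by lia.
  case: (eqVneq s 0%N) => [->|s0]; first by rewrite expr0 scale1r.
  have hs' : (2 <= s.+1 <= n)%N by lia.
  have M1 := M _ hs'; rewrite /= in M1.
  have -> : Y s.+2 = (1 + 'X) *: Y s.+1 - 'X *: Y s by rewrite M1 addrC addKr.
  rewrite scalerDl scale1r addrAC [Y s.+1 + _]addrC addrK -scalerBr.
  rewrite IH; last by lia.
  by rewrite scalerA -exprS prednK ?lt0n.
elim=> [|s IH] hs; first by lia.
case: (eqVneq s 0%N) => [->|s0]; first by rewrite /qint big_ord0 scale0r addr0.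
have -> : Y s.+1 = Y s + (Y s.+1 - Y s) by rewrite addrC subrK.
rewrite SA; last by lia.
rewrite IH; last by lia.
have QS : qint s = qint s.-1 + 'X ^+ s.-1.
  rewrite -{1}(@prednK s) ?lt0n // -addn1 qint_add.
  by rewrite [qint 1]/qint big_ord1 expr0 mulr1.
by rewrite /= QS scalerDl addrA.
Qed.

Lemma lin_id (V : lmodType {poly int}) (E En : V) (F a b Q : {poly int}) :
  (F * (a + b)) *: E + a *: (F *: (Q *: En - E)) = F *: ((Q * a) *: En + b *: E).
Proof.
rewrite !scalerBr !scalerDr !scalerA mulrDr scalerDl.
have -> : a * F * Q = F * (Q * a) by ring.
rewrite [a * F]mulrC.
by rewrite addrC -addrA addKr.
Qed.

Lemma Yformula n N r : (1 <= n)%N -> (1 <= r <= n)%N ->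
  chromQS n.+1 (mr n r) N = qfact n.-1 *:
    ((qint n.+1 * qint r.-1) *: mesym N {poly int} n.+1
     + ('X ^+ r.-1 * qint (n.+1 - r)) *: (mesym N {poly int} n * mesym N {poly int} 1)).
Proof.
move=> hn hr.
have R := @rec_gen _ (fun s => chromQS n.+1 (mr n s) N) n
            (fun s hs => modular N hs).
have QF : qfact n = qfact n.-1 * qint n by case: (n) hn => // n0 _; rewrite qfactS.
pose Ds := qfact n.-1 *: (qint n.+1 *: mesym N {poly int} n.+1
                           - mesym N {poly int} n * mesym N {poly int} 1).
have HD : chromQS n.+1 (mr n 2) N - chromQS n.+1 (mr n 1) N = Ds.
  have top : chromQS n.+1 (mr n n.+1) N = chromQS n.+1 (mr n 1) N +
     qint n *: (chromQS n.+1 (mr n 2) N - chromQS n.+1 (mr n 1) N).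
    by apply: R; rewrite leqnn andbT.
  rewrite Ytop Y1 in top.
  apply: (scale_inj (qint_neq0 hn)).
  rewrite /Ds Y1 [RHS]scalerA [qint n * _]mulrC -QF [RHS]scalerBr scalerA -qfactS top.
  by rewrite [qfact n *: _ + _]addrC addrK.
have fr : chromQS n.+1 (mr n r) N = chromQS n.+1 (mr n 1) N +
     qint r.-1 *: (chromQS n.+1 (mr n 2) N - chromQS n.+1 (mr n 1) N).
  by apply: R; lia.
rewrite fr HD Y1 /Ds.
have QA : qint n = qint r.-1 + 'X ^+ r.-1 * qint (n.+1 - r).
  by rewrite -qint_add; congr qint; lia.
rewrite QF QA.
move: (mesym N {poly int} n * mesym N {poly int} 1) (mesym N {poly int} n.+1) => E En.
exact: lin_id.
Qed.

Unset Implicit Arguments.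

Theorem corollary4p3 (n r : nat) (m : nat -> nat) :
  (2 <= n)%N ->
  is_nuio_seq n m ->
  (r <= n.-1)%N ->
  m 1%N = r ->
  (forall k, (2 <= k <= n.-1)%N -> m k = n) ->
  forall N : nat,
    chromQS n m N =
    qfact (n - 2) *:
      ((qint n * qint r.-1) *: mesym N {poly int} n
       + ('X ^+ r.-1 * qint (n - r)) *:
           (mesym N {poly int} n.-1 * mesym N {poly int} 1)).
Proof.
move=> hn [H1 _] hr hm1 hmk N.
case: n hn H1 hr hmk => [//|n] hn H1 hr hmk.
have n1 : (1 <= n)%N by lia.
have r1 : (1 <= r)%N.
  have := H1 1%N; rewrite hm1 /=; move=> /(_ n1) /andP[]; done.
rewrite (@chromQS_ext _ _ (mr n r)); last first.
  move=> u v; rewrite /inc_edge /mr; case: (ltnP u v) => h //=.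
  case: (eqVneq (nat_of_ord u).+1 1%N) => [e|e].
    by rewrite e hm1.
  rewrite hmk //; have := ltn_ord v; lia.
rewrite Yformula //; last by rewrite r1.
have -> : (n.+1 - 2 = n.-1)%N by lia.
by [].
Qed.
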